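(* Let arbitrary values $\boldsymbol y^*_n\in\mathbb R^{MN}_+$ ($n\in\mathcal T$) and $u^*_n\in\mathbb R$ ($n\in\mathcal T\setminus\{1\}$) be given. Define $\boldsymbol x^{MS}_1=\lceil\boldsymbol B_{t_1}\boldsymbol y^*_1\rceil$, $\boldsymbol x^{MS}_n=\max_{m\in\mathcal P(n)}\lceil\boldsymbol B_{t_m}\boldsymbol y^*_m\rceil-\max_{m\in\mathcal P(a(n))}\lceil\boldsymbol B_{t_m}\boldsymbol y^*_m\rceil$ for $n\ne1$, $\eta^{MS}_n=\max_{m\in\mathcal C(n)}\{\boldsymbol f_{t_m}^{\mathsf T}\sum_{l\in\mathcal P(m)}\boldsymbol x^{MS}_l+\boldsymbol c_{t_m}^{\mathsf T}\boldsymbol y^*_m-u^*_m\}$ for $n\notin\mathcal L$, $\boldsymbol x^{TS}_1=\lceil\boldsymbol B_{t_1}\boldsymbol y^*_1\rceil$, $\boldsymbol x^{TS}_n=\max_{m\in\mathcal P(n)}\lceil\max_{l\in\mathcal T_{t_m}}\boldsymbol B_{t_l}\boldsymbol y^*_l\rceil-\max_{m\in\mathcal P(a(n))}\lceil\max_{l\in\mathcal T_{t_m}}\boldsymbol B_{t_l}\boldsymbol y^*_l\rceil$ for $n\ne1$, $\eta^{TS}_n=\max_{m\in\mathcal C(n)}\{\boldsymbol f_{t_m}^{\mathsf T}\sum_{l\in\mathcal P(m)}\boldsymbol x^{TS}_l+\boldsymbol c_{t_m}^{\mathsf T}\boldsymbol y^*_m-u^*_m\}$ for $n\notin\mathcal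 L$. Then $(\boldsymbol x^{MS},\eta^{MS})$ is an optimal solution of $\mathbf{SP\text{-}RMS}(\boldsymbol y^*,u^* )$ and $(\boldsymbol x^{TS},\eta^{TS})$ is an optimal solution of $\mathbf{SP\text{-}RTS}(\boldsymbol y^*,u^* )$; consequently $Q^M(\boldsymbol y^*,u^* )=\sum_{n\in\mathcal T}p_n\big(\tilde{\boldsymbol f}_n^{\mathsf T}\sum_{m\in\mathcal P(n)}\boldsymbol x^{MS}_m+\tilde\lambda_n\eta^{MS}_n\big)$ and $Q^T(\boldsymbol y^*,u^* )=\sum_{n\in\mathcal T}p_n\big(\tilde{\boldsymbol f}_n^{\mathsf T}\sum_{m\in\mathcal P(n)}\boldsymbol x^{TS}_m+\tilde\lambda_n\eta^{TS}_n\big)$.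
   Context: Setting. Fix integers $T\ge 2$, $M\ge1$, $N\ge1$. For each period $t$: maintenance costs $f_{ti}\ge 0$ forming $\boldsymbol f_t\in\mathbb R^M$; operational costs $c_{tij}\ge0$ forming $\boldsymbol c_t\in\mathbb R^{MN}$; capacities $h_{ti}>0$. $\boldsymbol B_t\in\mathbb R^{M\times MN}$ is the matrix with $(\boldsymbol B_t\boldsymbol y)_i=\frac1{h_{ti}}\sum_{j=1}^N y_{ij}$. Ceilings and maxima of vectors are taken componentwise. Scenario tree: a finite rooted tree with node set $\mathcal T$ and root $1$, all root-to-leaf paths having $T$ nodes; $\mathcal T_t$ is the set of nodes at depth $t$, $t_n$ the period of node $n$, $\mathcal L=\mathcal T_T$ the leaves, $a(n)$ the parent of $n\ne1$, $\mathcal C(n)$ the children of $n$, $\mathcal P(n)$ the set of nodes on the root-to-$n$ path (inclusive). Node probabilities $p_n>0$ satisfy $\sum_{n\in\mathcal T_t}p_n=1$ and $\sum_{m\in\mathcal C(n)}p_m=p_n$ for $n\notin\mathcal L$. Risk parameters $\lambda_t\in[0,1]$, $\alpha_t\in(0,1)$, $t=2,\ldots,T$. $\tilde{\boldsymbol f}_n=\boldsymbol f_{t_n}$ if $n=1$, else $(1-\lambda_{t_n})\boldsymbol f_{t_n}$; $\tilde\lambda_n=0$ if $n\in\mathcal L$, else $\lambda_{t_n+1}$. $\mathbf{SP\text{-}RMS}(\boldsymbol y^*,u^* )$: minimize $\sum_{n\in\mathcal T}p_n\big(\tilde{\boldsymbol f}_n^{\mathsf T}\sum_{m\in\mathcal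 P(n)}\boldsymbol x_m+\tilde\lambda_n\eta_n\big)$ over $\boldsymbol x_n\in\mathbb Z^M_+$ ($n\in\mathcal T$), $\eta_n\in\mathbb R$ ($n\notin\mathcal L$), subject to $\sum_{m\in\mathcal P(n)}\boldsymbol x_m\ge\boldsymbol B_{t_n}\boldsymbol y^*_n$ for all $n\in\mathcal T$ and $\eta_{a(n)}\ge\boldsymbol f_{t_n}^{\mathsf T}\sum_{m\in\mathcal P(n)}\boldsymbol x_m+\boldsymbol c_{t_n}^{\mathsf T}\boldsymbol y^*_n-u^*_n$ for all $n\ne1$. Its optimal value is $Q^M(\boldsymbol y^*,u^* )$. $\mathbf{SP\text{-}RTS}(\boldsymbol y^*,u^* )$: the same problem with the additional constraints $\boldsymbol x_m=\boldsymbol x_n$ for all $m,n\in\mathcal T_t$, $t=1,\ldots,T$. Its optimal value is $Q^T(\boldsymbol y^*,u^* )$. *)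

(* Defs.v *)
From HB Require Import structures.
From mathcomp Require Import all_boot all_order all_algebra.
From mathcomp Require Import reals.
Set Implicit Arguments. Unset Strict Implicit. Unset Printing Implicit Defensive.
Import Order.TTheory GRing.Theory Num.Theory.
Local Open Scope ring_scope.

Section Defs.
Variable R : realType.
Variable T : finType.          (* node set of the scenario tree *)
Variable r : T.                (* root (node 1) *)
Variable par : T -> T.         (* parent a(n) (value at the root irrelevant) *)
Variable dep : T -> nat.       (* period t_n, root at period 1 *)
Variable Tp : nat.

(* well-formed scenario tree: all root-to-leaf paths have Tp nodes *)
Definition scenario_tree : Prop :=
  [/\ dep r = 1%N,
      (forall n, (0 < dep n)%N),
      (forall n, n != r -> dep n = (dep (par n)).+1),
      (forall n, (dep n <= Tp)%N) &
      (forall n, (dep n < Tp)%N -> exists m, m != r /\ par m = n)].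

(* P(n): nodes on the root-to-n path (inclusive) *)
Definition pathP (n : T) : {set T} :=
  [set m | [exists k : 'I_(dep n), iter k par n == m]].
Definition children (n : T) : {set T} := [set m | (m != r) && (par m == n)].
Definition stage (t : nat) : {set T} := [set n | dep n == t].
Definition is_leaf (n : T) : bool := dep n == Tp.

Variables (M N : nat).
Variable f : nat -> 'I_M -> R.
Variable c : nat -> 'I_M -> 'I_N -> R.
Variable h : nat -> 'I_M -> R.
Variable lam : nat -> R.
Variable p : T -> R.

Definition Bmat (t : nat) (y : 'I_M -> 'I_N -> R) (i : 'I_M) : R :=
  (h t i)^-1 * \sum_(j < N) y i j.

Definition ftil (n : T) (i : 'I_M) : R :=
  if n == r then f (dep n) i else (1 - lam (dep n)) * f (dep n) i.
Definition ltil (n : T) : R := if is_leaf n then 0 else lam (dep n).+1.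

Variable y : T -> 'I_M -> 'I_N -> R.
Variable u : T -> R.

Definition cum (x : T -> 'I_M -> int) (n : T) (i : 'I_M) : int :=
  \sum_(m in pathP n) x m i.

Definition lossn (X : 'I_M -> int) (n : T) : R :=
  \sum_(i < M) f (dep n) i * (X i)%:~R
  + \sum_(i < M) \sum_(j < N) c (dep n) i j * y n i j - u n.

(* objective of SP-RMS / SP-RTS; eta at leaves has coefficient 0 *)
Definition objective (x : T -> 'I_M -> int) (eta : T -> R) : R :=
  \sum_(n : T) p n *
    (\sum_(i < M) ftil n i * (cum x n i)%:~R + ltil n * eta n).

Definition feasible_RMS (x : T -> 'I_M -> int) (eta : T -> R) : Prop :=
  [/\ (forall n i, 0 <= x n i),
      (forall n i, Bmat (dep n) (y n) i <= (cum x n i)%:~R) &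
      (forall n, n != r -> lossn (cum x n) n <= eta (par n))].

Definition feasible_RTS (x : T -> 'I_M -> int) (eta : T -> R) : Prop :=
  feasible_RMS x eta /\
  (forall t m n, m \in stage t -> n \in stage t -> x m = x n).

Definition optimal (feas : (T -> 'I_M -> int) -> (T -> R) -> Prop)
    (x : T -> 'I_M -> int) (eta : T -> R) : Prop :=
  feas x eta /\ forall x' eta', feas x' eta' -> objective x eta <= objective x' eta'.

Definition optimal_value (feas : (T -> 'I_M -> int) -> (T -> R) -> Prop) (v : R) : Prop :=
  (exists x eta, feas x eta /\ objective x eta = v) /\
  (forall x eta, feas x eta -> v <= objective x eta).

(* max over a nonempty family, written with an element of the family as seed *)
Definition cB (m : T) (i : 'I_M) : int := Num.ceil (Bmat (dep m) (y m) i).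

Definition cummaxMS (n : T) (i : 'I_M) : int :=
  \big[Num.max/cB n i]_(m in pathP n) cB m i.

Definition xMS (n : T) (i : 'I_M) : int :=
  if n == r then cB r i else cummaxMS n i - cummaxMS (par n) i.

Definition cBT (m : T) (i : 'I_M) : int :=
  Num.ceil (\big[Num.max/Bmat (dep m) (y m) i]_(l in stage (dep m)) Bmat (dep l) (y l) i).

Definition cummaxTS (n : T) (i : 'I_M) : int :=
  \big[Num.max/cBT n i]_(m in pathP n) cBT m i.

Definition xTS (n : T) (i : 'I_M) : int :=
  if n == r then cB r i else cummaxTS n i - cummaxTS (par n) i.

(* eta_n = max over children m of loss; the value at leaves is irrelevant (0) *)
Definition etaOf (x : T -> 'I_M -> int) (n : T) : R :=
  match [pick m in children n] with
  | Some m0 => \big[Num.max/lossn (cum x m0) m0]_(m in children n) lossn (cum x m) m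
  | None => 0
  end.

Definition etaMS := etaOf xMS.
Definition etaTS := etaOf xTS.

End Defs.

(* Main.v *)
Require Import Defs.
From HB Require Import structures.
From mathcomp Require Import all_boot all_order all_algebra.
From mathcomp Require Import reals.
From Stdlib Require Import FunctionalExtensionality.
Set Implicit Arguments. Unset Strict Implicit. Unset Printing Implicit Defensive.
Import Order.TTheory GRing.Theory Num.Theory.
Local Open Scope ring_scope.

Section Tree.
Variable T : finType.
Variables (r : T) (par : T -> T) (dep : T -> nat) (Tp : nat).
Hypothesis Ht : scenario_tree r par dep Tp.

Lemma dep_gt0 n : (0 < dep n)%N.
Proof. by case: Ht. Qed.

Lemma dep_par n : n != r -> dep n = (dep (par n)).+1.
Proof. by case: Ht => _ _ H _ _; apply: H. Qed.

Lemma dep1 n : (dep n == 1%N) = (n == r).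
Proof.
case: Ht => Hr _ _ _ _.
case: (eqVneq n r) => [->|nr]; first by rewrite Hr.
by rewrite dep_par // eqSS; move: (dep_gt0 (par n)); rewrite lt0n => /negPf ->.
Qed.

Lemma dep_iter k n : (k < dep n)%N -> dep (iter k par n) = (dep n - k)%N.
Proof.
elim: k n => [|k IH] n hk; first by rewrite subn0.
rewrite iterSr.
have nr : n != r by rewrite -dep1; apply/eqP => e; rewrite e in hk.
rewrite IH; last by move: hk; rewrite (dep_par nr).
by rewrite (dep_par nr) subSS.
Qed.

Lemma mem_pathP m n : (m \in Defs.pathP par dep n) = [exists k : 'I_(dep n), iter k par n == m].
Proof. by rewrite inE. Qed.

Lemma pathP_self n : n \in Defs.pathP par dep n.
Proof. rewrite mem_pathP; apply/existsP; by exists (Ordinal (dep_gt0 n)). Qed.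

Lemma pathP_dep m n : m \in Defs.pathP par dep n -> (dep m <= dep n)%N.
Proof.
by rewrite mem_pathP => /existsP [k /eqP <-]; rewrite dep_iter // leq_subr.
Qed.

Lemma pathP_r : Defs.pathP par dep r = [set r].
Proof.
apply/setP => m; rewrite mem_pathP inE; case: Ht => Hr _ _ _ _.
apply/existsP/idP => [[k]|/eqP ->].
  case: k => k hk /= /eqP <-.
  by move: hk; rewrite Hr ltnS leqn0 => /eqP ->.
by exists (Ordinal (dep_gt0 r)).
Qed.

Lemma pathP_par n : n != r -> Defs.pathP par dep n = n |: Defs.pathP par dep (par n).
Proof.
move=> nr; apply/setP => m; rewrite in_setU1 !mem_pathP.
apply/existsP/idP.
  case=> [[[|k] hk]] /= /eqP <-; first by rewrite eqxx.
  apply/orP; right; apply/existsP.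
  have hk' : (k < dep (par n))%N by move: hk; rewrite (dep_par nr).
  by exists (Ordinal hk'); rewrite /= -iterSr.
case/orP => [/eqP ->|/existsP [[k hk]] /= /eqP <-].
  by exists (Ordinal (dep_gt0 n)).
have hk' : (k.+1 < dep n)%N by rewrite (dep_par nr).
by exists (Ordinal hk'); apply/eqP; exact: iterSr.
Qed.

Lemma par_notin n : n != r -> n \notin Defs.pathP par dep (par n).
Proof.
move=> nr; apply/negP => /pathP_dep; by rewrite (dep_par nr) ltnn.
Qed.

Lemma pathP_trans m n : m \in Defs.pathP par dep n -> {subset Defs.pathP par dep m <= Defs.pathP par dep n}.
Proof.
rewrite mem_pathP => /existsP [[k hk]] /= /eqP <- l.
rewrite mem_pathP => /existsP [[j hj]] /= /eqP <-.
rewrite mem_pathP; apply/existsP.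
have hjk : (j + k < dep n)%N.
  move: hj; rewrite dep_iter // => hj.
  by rewrite addnC -ltn_subRL.
by exists (Ordinal hjk); rewrite /= iterD.
Qed.

Lemma stage1 : stage dep 1 = [set r].
Proof. by apply/setP => m; rewrite !inE dep1. Qed.

Lemma dep_ind (P : T -> Prop) :
  P r -> (forall n, n != r -> P (par n) -> P n) -> forall n, P n.
Proof.
move=> H0 HS n; move: {2}(dep n) (erefl (dep n)) => d; elim: d n => [|d IH] n hd.
  by have := dep_gt0 n; rewrite hd.
case: (eqVneq n r) => [->//|nr]; apply: HS => //; apply: IH.
by move: hd; rewrite (dep_par nr) => -[].
Qed.


Variable M : nat.
Notation PP := (Defs.pathP par dep).

Lemma cum_r (x : T -> 'I_M -> int) i : cum par dep x r i = x r i.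
Proof. by rewrite /cum pathP_r big_set1. Qed.

Lemma cum_par (x : T -> 'I_M -> int) n i : n != r ->
  cum par dep x n i = x n i + cum par dep x (par n) i.
Proof. by move=> nr; rewrite /cum pathP_par // big_setU1 //= par_notin. Qed.

Lemma cum_mono (x : T -> 'I_M -> int) m n i : (forall l, 0 <= x l i) ->
  m \in PP n -> cum par dep x m i <= cum par dep x n i.
Proof.
move=> x0 mn; rewrite /cum [X in _ <= X](big_setID (PP m)).
have -> : PP n :&: PP m = PP m by apply/setIidPr/subsetP/pathP_trans.
by rewrite lerDl sumr_ge0.
Qed.

Definition cmx (g : T -> 'I_M -> int) n i :=
  \big[Num.max/g n i]_(m in PP n) g m i.
Definition xg (g : T -> 'I_M -> int) n i :=
  if n == r then g r i else cmx g n i - cmx g (par n) i.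

Lemma cmx_ge g n i : g n i <= cmx g n i.
Proof. exact: bigmax_ge_id. Qed.

Lemma cmx_ge_in g n m i : m \in PP n -> g m i <= cmx g n i.
Proof. move=> mn; exact: le_bigmax_cond. Qed.

Lemma cmx_le g n i z : g n i <= z -> (forall m, m \in PP n -> g m i <= z) ->
  cmx g n i <= z.
Proof. move=> h1 h2; exact: bigmax_le. Qed.

Lemma cmx_r g i : cmx g r i = g r i.
Proof. by rewrite /cmx pathP_r big_set1E maxxx. Qed.

Lemma cum_xg g n i : cum par dep (xg g) n i = cmx g n i.
Proof.
elim/dep_ind: n => [|n nr IH]; first by rewrite cum_r /xg eqxx cmx_r.
by rewrite cum_par // IH /xg (negPf nr) subrK.
Qed.

Lemma cmx_par g n i : n != r -> cmx g (par n) i <= cmx g n i.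
Proof.
move=> nr; apply: cmx_le.
  by apply: cmx_ge_in; rewrite pathP_par // setU1r // pathP_self.
by move=> m mp; apply: cmx_ge_in; rewrite pathP_par // setU1r.
Qed.

Lemma xg_ge0 g n i : (forall m, 0 <= g m i) -> 0 <= xg g n i.
Proof.
move=> g0; rewrite /xg; case: eqP => // /eqP nr.
by rewrite subr_ge0 cmx_par.
Qed.

Lemma cmx_le_cum g (x : T -> 'I_M -> int) n i : (forall l, 0 <= x l i) ->
  (forall m, g m i <= cum par dep x m i) -> cmx g n i <= cum par dep x n i.
Proof.
move=> x0 gx; apply: cmx_le => // m mn.
exact: le_trans (gx m) (cum_mono x0 mn).
Qed.

End Tree.
Section Main.
Variables (R : realType) (T : finType) (r : T) (par : T -> T) (dep : T -> nat) (Tp M N : nat)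
  (f : nat -> 'I_M -> R) (c : nat -> 'I_M -> 'I_N -> R) (h : nat -> 'I_M -> R)
  (lam : nat -> R) (p : T -> R) (y : T -> 'I_M -> 'I_N -> R) (u : T -> R).
Hypothesis Ht : scenario_tree r par dep Tp.
Hypothesis f0 : forall t i, (1 <= t <= Tp)%N -> 0 <= f t i.
Hypothesis h0 : forall t i, (1 <= t <= Tp)%N -> 0 < h t i.
Hypothesis p0 : forall n, 0 < p n.
Hypothesis lam01 : forall t, (2 <= t <= Tp)%N -> 0 <= lam t <= 1.
Hypothesis y0 : forall n i j, 0 <= y n i j.

Notation PP := (Defs.pathP par dep).
Notation B m i := (Bmat h (dep m) (y m) i).
Notation FRMS := (feasible_RMS r par dep f c h y u).
Notation FRTS := (feasible_RTS r par dep f c h y u).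
Notation obj := (objective r par dep Tp f lam p).
Notation cumx := (cum par dep).
Notation loss := (lossn dep f c y u).
Notation eta := (etaOf r par dep f c y u).

Lemma dep_rng m : (1 <= dep m <= Tp)%N.
Proof. by rewrite (dep_gt0 Ht); case: Ht => _ _ _ ->. Qed.

Lemma B_ge0 m i : 0 <= B m i.
Proof.
rewrite /Bmat; apply: mulr_ge0; first by rewrite invr_ge0 ltW // h0 // dep_rng.
by apply: sumr_ge0 => j _.
Qed.

Lemma ceil_ge0' (x : R) : 0 <= x -> 0 <= Num.ceil x.
Proof. by move=> x0; rewrite ceil_ge0 (lt_le_trans _ x0) // ltrN10. Qed.

Lemma loss_mono X X' n : (forall i, X i <= X' i) -> loss X n <= loss X' n.
Proof.
move=> hX; rewrite /lossn lerD2r lerD2r ler_sum // => i _.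
by rewrite ler_wpM2l ?f0 ?dep_rng // ler_int.
Qed.

Lemma ftil_ge0 n i : 0 <= ftil r dep f lam n i.
Proof.
rewrite /ftil; case: eqP => [_|/eqP nr]; first by rewrite f0 ?dep_rng.
rewrite mulr_ge0 ?f0 ?dep_rng // subr_ge0.
have hd : (1 < dep n <= Tp)%N.
  rewrite (dep_par Ht nr) ltnS (dep_gt0 Ht) /=.
  by rewrite -ltnS -(dep_par Ht nr); case: Ht => _ _ _ + _; apply.
by have /andP[_ ->] := lam01 hd.
Qed.

Lemma nonleaf_child n : ~~ is_leaf dep Tp n -> exists m, m \in children r par n.
Proof.
move=> nl; case: Ht => _ _ _ hle hch.
have : (dep n < Tp)%N by rewrite ltn_neqAle nl hle.
by case/hch => m [mr pm]; exists m; rewrite inE mr pm eqxx.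
Qed.

Lemma ltil_ge0 n : 0 <= ltil dep Tp lam n.
Proof.
rewrite /ltil; case: ifP => // /negbT nl.
have hd : (1 < (dep n).+1 <= Tp)%N.
  rewrite ltnS (dep_gt0 Ht) /= ltn_neqAle nl.
  by case: Ht => _ _ _ + _; apply.
by have /andP[-> _] := lam01 hd.
Qed.

Section Gen.
Variable xs : T -> 'I_M -> int.
Variable F : (T -> 'I_M -> int) -> (T -> R) -> Prop.
Hypothesis FF : forall x e, F x e -> FRMS x e.
Hypothesis xs0 : forall n i, 0 <= xs n i.
Hypothesis xsB : forall n i, B n i <= (cumx xs n i)%:~R.
Hypothesis xsmin : forall x e, F x e -> forall n i, cumx xs n i <= cumx x n i.

Lemma eta_ge n : n != r -> loss (cumx xs n) n <= eta xs (par n).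
Proof.
move=> nr; have hn : n \in children r par (par n) by rewrite inE nr eqxx.
rewrite /etaOf; case: pickP => [m0 hm0|none]. exact: (@le_bigmax_cond _ R _ _ n _ (fun m => loss (cumx xs m) m) hn).
by have := none n; rewrite hn.
Qed.

Lemma xs_feas : FRMS xs (eta xs).
Proof. split => //; exact: eta_ge. Qed.

Lemma eta_le x e : F x e -> forall n, ~~ is_leaf dep Tp n -> eta xs n <= e n.
Proof.
move=> Fxe n nl; have [_ _ He] := FF Fxe.
have lm : forall m, m \in children r par n -> loss (cumx xs m) m <= e n.
  move=> m; rewrite inE => /andP [mr /eqP <-].
  exact: le_trans (loss_mono _ (xsmin Fxe m)) (He m mr).
rewrite /etaOf; case: pickP => [m0 hm0|none]; first exact: bigmax_le (lm m0 hm0) lm.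
by have [m hm] := nonleaf_child nl; have := none m; rewrite hm.
Qed.

Lemma xs_opt x e : F x e -> obj xs (eta xs) <= obj x e.
Proof.
move=> Fxe; rewrite /objective ler_sum // => n _.
apply: ler_wpM2l; first exact: ltW. apply: lerD.
  by rewrite ler_sum // => i _; rewrite ler_wpM2l ?ftil_ge0 // ler_int (xsmin Fxe).
have := ltil_ge0 n; rewrite /ltil; case: ifP => [_ _|/negbT nl l0].
  by rewrite !mul0r.
apply: ler_wpM2l => //; exact: (eta_le Fxe nl).
Qed.
End Gen.

Notation cBm := (cB dep h y).
Notation cBTm := (cBT dep h y).

Lemma xMS_E : xMS r par dep h y = xg r par dep cBm.
Proof. by []. Qed.

Lemma cB_ge0 m i : 0 <= cBm m i.
Proof. exact: ceil_ge0' (B_ge0 m i). Qed.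

Lemma cB_le x e m i : FRMS x e -> cBm m i <= cumx x m i.
Proof. by case=> _ hB _; rewrite /cB ceil_le_int hB. Qed.

Lemma MS_opt : optimal r par dep Tp f lam p FRMS (xMS r par dep h y) (eta (xMS r par dep h y)).
Proof.
rewrite xMS_E.
have xs0 : forall n i, 0 <= xg r par dep cBm n i.
  by move=> n i; apply: (xg_ge0 Ht) => m; exact: cB_ge0.
have xsB : forall n i, B n i <= (cumx (xg r par dep cBm) n i)%:~R.
  move=> n i; rewrite (cum_xg Ht); apply: le_trans (ceil_ge _) _.
  by rewrite ler_int; exact: cmx_ge.
have xsmin : forall x e, FRMS x e -> forall n i,
    cumx (xg r par dep cBm) n i <= cumx x n i.
  move=> x e Fxe n i; rewrite (cum_xg Ht); apply: (cmx_le_cum Ht).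
    by case: Fxe => x0 _ _ l; exact: x0.
  by move=> m; exact: cB_le Fxe.
split; first exact: xs_feas.
move=> x e Fxe; exact: (xs_opt (F := FRMS)).
Qed.

Lemma bigmax_seed (G : T -> R) (A : {set T}) a b : a \in A -> b \in A ->
  \big[Num.max/G a]_(l in A) G l = \big[Num.max/G b]_(l in A) G l.
Proof.
move=> aA bA; apply/le_anti/andP; split; apply: bigmax_le => //.
- exact: (@le_bigmax_cond _ R _ _ a _ G aA).
- by move=> l lA; exact: (@le_bigmax_cond _ R _ _ l _ G lA).
- exact: (@le_bigmax_cond _ R _ _ b _ G bA).
- by move=> l lA; exact: (@le_bigmax_cond _ R _ _ l _ G lA).
Qed.

Lemma cBT_r i : cBTm r i = cBm r i.
Proof.
rewrite /cBT /cB; have -> : stage dep (dep r) = [set r].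
  by case: Ht => Hr _ _ _ _; rewrite Hr (stage1 Ht).
by rewrite big_set1E maxxx.
Qed.

Lemma xTS_E : xTS r par dep h y = xg r par dep cBTm.
Proof.
apply: functional_extensionality => n; apply: functional_extensionality => i.
by rewrite /xTS /xg cBT_r.
Qed.

Lemma B_le_seed (G : T -> R) (A : {set T}) a : G a <= \big[Num.max/G a]_(l in A) G l.
Proof. exact: bigmax_ge_id. Qed.

Lemma cBT_ge_B m i : B m i <= (cBTm m i)%:~R.
Proof. exact: le_trans (B_le_seed (fun l => B l i) _ m) (ceil_ge _). Qed.

Lemma cBT_ge0 m i : 0 <= cBTm m i.
Proof. exact: ceil_ge0' (le_trans (B_ge0 m i) (B_le_seed (fun l => B l i) _ m)). Qed.

Lemma cum_stage (x : T -> 'I_M -> int)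
  (hs : forall t m n, m \in stage dep t -> n \in stage dep t -> x m = x n) m n i :
  dep m = dep n -> cumx x m i = cumx x n i.
Proof.
elim/(dep_ind Ht): m n => [|m mr IH] n hd.
  by have /eqP -> : n == r by rewrite -(dep1 Ht) -hd (dep1 Ht).
have nr : n != r by rewrite -(dep1 Ht) -hd (dep1 Ht).
rewrite (cum_par Ht x i mr) (cum_par Ht x i nr) (hs (dep m) m n) ?inE ?hd // (IH (par n)) //.
by move: hd; rewrite (dep_par Ht mr) (dep_par Ht nr) => -[].
Qed.

Lemma cBT_le x e m i : FRTS x e -> cBTm m i <= cumx x m i.
Proof.
case=> [[x0 hB _] hs]; rewrite /cBT ceil_le_int; apply: bigmax_le; first exact: hB.
move=> l; rewrite inE => /eqP hl.
by rewrite (cum_stage hs (m:=m) (n:=l)) //; exact: hB.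
Qed.

Lemma cBT_dep m n i : dep m = dep n -> cBTm m i = cBTm n i.
Proof.
move=> hd; rewrite /cBT.
have -> : stage dep (dep m) = stage dep (dep n) by rewrite hd.
congr Num.ceil; apply: (bigmax_seed (fun l => B l i)); by rewrite inE ?hd.
Qed.

Lemma cmx_dep_le m n i : dep m = dep n ->
  cmx par dep cBTm m i <= cmx par dep cBTm n i.
Proof.
move=> hd; apply: cmx_le; first by rewrite (cBT_dep i hd); exact: cmx_ge.
move=> l; rewrite mem_pathP => /existsP [[k hk]] /= /eqP <-.
have hk' : (k < dep n)%N by rewrite -hd.
have -> : cBTm (iter k par m) i = cBTm (iter k par n) i.
  by apply: cBT_dep; rewrite !(dep_iter Ht) // hd.
by apply: cmx_ge_in; rewrite mem_pathP; apply/existsP; exists (Ordinal hk').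
Qed.

Lemma cmx_dep m n i : dep m = dep n ->
  cmx par dep cBTm m i = cmx par dep cBTm n i.
Proof. by move=> hd; apply/le_anti; rewrite !cmx_dep_le. Qed.

Lemma xTS_stage t m n : m \in stage dep t -> n \in stage dep t ->
  xg r par dep cBTm m = xg r par dep cBTm n.
Proof.
rewrite !inE => /eqP hm /eqP hn; have hd : dep m = dep n by rewrite hm hn.
apply: functional_extensionality => i; rewrite /xg.
case: (eqVneq m r) => [mr|mr].
  subst m; have /eqP -> : n == r by rewrite -(dep1 Ht) -hd (dep1 Ht).
  by rewrite eqxx.
have nr : n != r by rewrite -(dep1 Ht) -hd (dep1 Ht).
have hp : dep (par m) = dep (par n).
  by move: hd; rewrite (dep_par Ht mr) (dep_par Ht nr) => -[].
by rewrite ?(negPf mr) (negPf nr) (cmx_dep i hd) (cmx_dep i hp).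
Qed.

Lemma TS_opt : optimal r par dep Tp f lam p FRTS (xTS r par dep h y) (eta (xTS r par dep h y)).
Proof.
rewrite xTS_E.
have xs0 : forall n i, 0 <= xg r par dep cBTm n i.
  by move=> n i; apply: (xg_ge0 Ht) => m; exact: cBT_ge0.
have xsB : forall n i, B n i <= (cumx (xg r par dep cBTm) n i)%:~R.
  move=> n i; rewrite (cum_xg Ht); apply: le_trans (cBT_ge_B n i) _.
  by rewrite ler_int; exact: cmx_ge.
have xsmin : forall x e, FRTS x e -> forall n i,
    cumx (xg r par dep cBTm) n i <= cumx x n i.
  move=> x e Fxe n i; rewrite (cum_xg Ht); apply: (cmx_le_cum Ht).
    by case: Fxe => [[x0 _ _] _] l; exact: x0.
  by move=> m; exact: cBT_le Fxe.
split.
  split; first exact: xs_feas.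
  exact: xTS_stage.
move=> x e Fxe; apply: (xs_opt (F := FRTS)); try eassumption.
  by move=> ? ? [].
Qed.
End Main.

Lemma opt_val (R : realType) (T : finType) r par dep Tp M f lam p feas
  (x : T -> 'I_M -> int) (e : T -> R) :
  optimal r par dep Tp f lam p feas x e ->
  optimal_value r par dep Tp f lam p feas (objective r par dep Tp f lam p x e).
Proof. by case=> hf ho; split; [exists x, e | exact: ho]. Qed.

Theorem proposition2 (R : realType) (T : finType) (r : T) (par : T -> T)
  (dep : T -> nat) (Tp M N : nat)
  (f : nat -> 'I_M -> R) (c : nat -> 'I_M -> 'I_N -> R) (h : nat -> 'I_M -> R)
  (lam alpha : nat -> R) (p : T -> R)
  (y : T -> 'I_M -> 'I_N -> R) (u : T -> R) :
  (2 <= Tp)%N -> (1 <= M)%N -> (1 <= N)%N ->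
  scenario_tree r par dep Tp ->
  (forall t i, (1 <= t <= Tp)%N -> 0 <= f t i) ->
  (forall t i j, (1 <= t <= Tp)%N -> 0 <= c t i j) ->
  (forall t i, (1 <= t <= Tp)%N -> 0 < h t i) ->
  (forall n, 0 < p n) ->
  (forall t, (1 <= t <= Tp)%N -> \sum_(n in stage dep t) p n = 1) ->
  (forall n, ~~ is_leaf dep Tp n -> \sum_(m in children r par n) p m = p n) ->
  (forall t, (2 <= t <= Tp)%N -> 0 <= lam t <= 1) ->
  (forall t, (2 <= t <= Tp)%N -> 0 < alpha t < 1) ->
  (forall n i j, 0 <= y n i j) ->
  let xM := xMS r par dep h y in
  let eM := etaMS r par dep f c h y u in
  let xT := xTS r par dep h y in
  let eT := etaTS r par dep f c h y u in
  [/\ optimal r par dep Tp f lam p (feasible_RMS r par dep f c h y u) xM eM,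
      optimal r par dep Tp f lam p (feasible_RTS r par dep f c h y u) xT eT,
      optimal_value r par dep Tp f lam p (feasible_RMS r par dep f c h y u)
        (objective r par dep Tp f lam p xM eM) &
      optimal_value r par dep Tp f lam p (feasible_RTS r par dep f c h y u)
        (objective r par dep Tp f lam p xT eT)].
Proof.
move=> _ _ _ Ht f0 _ h0 p0 _ _ lam01 _ y0 xM eM xT eT.
have hM : optimal r par dep Tp f lam p (feasible_RMS r par dep f c h y u) xM eM.
  exact: (MS_opt c u Ht f0 h0 p0 lam01 y0).
have hT : optimal r par dep Tp f lam p (feasible_RTS r par dep f c h y u) xT eT.
  exact: (TS_opt c u Ht f0 h0 p0 lam01 y0).
by split => //; apply: opt_val.
Qed.
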